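(* Let $\mathcal{C}$ be a Fraïssé class of finite structures over a finite relational language, all of whose members are rigid, with Fraïssé limit $M$, and suppose that $\mathcal{C}$ contains exactly one $2$-element structure up to isomorphism. Then either $M$ has a reduct which is a total order, or there exist $A,B\in\mathcal{C}$ with $|A|=2$ and $|B|=3$ such that for every $C\in\mathcal{C}$ there is a $2$-colouring of the embeddings $A\to C$ for which no embedding $B\to C$ is monochromatic (so $\mathcal{C}$ is not a Ramsey class).
   Context: All structures are non-empty, and classes are closed under isomorphism and hereditary. A Fraïssé class is a hereditary class with the joint embedding and amalgamation properties; its Fraïssé limit is the unique countable homogeneous structure with age $\mathcal{C}$. A reduct of $M$ which is a total order means a strict total order on the domain of $M$ definable in $M$ by a first-order formula without parameters. An embedding $g:B\to C$ is monochromatic for a colouring of the embeddings $A\to C$ if all embeddings $A\to C$ with image contained in the image of $g$ get the same colour. $\mathcal{C}$ is a Ramsey class if for all $A,B\in\mathcal{C}$ there is $C\in\mathcal{C}$ such that every $2$-colouring of the embeddings $A\to C$ admits a monochromatic embedding $B\to C$. *)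

(* Defs.v *)
From mathcomp Require Import all_boot.
Set Implicit Arguments. Unset Strict Implicit. Unset Printing Implicit Defensive.

Record lang := Lang { sym : finType; arity : sym -> nat }.

Record struct (L : lang) := Struct {
  car :> Type;
  rel : forall s : sym L, ('I_(arity s) -> car) -> Prop }.

Record fstruct (L : lang) := FStruct {
  fcar :> finType;
  frel : forall s : sym L, ('I_(arity s) -> fcar) -> Prop }.

Definition to_struct L (A : fstruct L) : struct L := @Struct L (fcar A) (@frel L A).
Coercion to_struct : fstruct >-> struct.

Section Basics.
Variable L : lang.

Definition embedding (A B : struct L) (f : A -> B) : Prop :=
  injective f /\
  forall (s : sym L) (a : 'I_(arity s) -> A), rel a <-> rel (f \o a).

Definition embeds (A B : struct L) : Prop := exists f : A -> B, embedding f.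

Definition isomorphism (A B : struct L) (f : A -> B) : Prop :=
  embedding f /\ forall y : B, exists x : A, f x = y.

Definition isomorphic (A B : struct L) : Prop := exists f : A -> B, isomorphism f.

Definition automorphism (A : struct L) (f : A -> A) : Prop := isomorphism f.

Definition rigid (A : struct L) : Prop :=
  forall f : A -> A, automorphism f -> forall x, f x = x.

Definition iso_closed (C : fstruct L -> Prop) : Prop :=
  forall A B : fstruct L, isomorphic A B -> C A -> C B.

Definition hereditary (C : fstruct L -> Prop) : Prop :=
  iso_closed C /\ (forall A : fstruct L, C A -> 0 < #|fcar A|) /\
  forall A B : fstruct L, 0 < #|fcar A| -> embeds A B -> C B -> C A.

Definition JEP (C : fstruct L -> Prop) : Prop :=
  forall A B : fstruct L, C A -> C B ->
    exists D : fstruct L, C D /\ embeds A D /\ embeds B D.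

Definition AP (C : fstruct L -> Prop) : Prop :=
  forall (A B1 B2 : fstruct L) (f1 : A -> B1) (f2 : A -> B2),
    C A -> C B1 -> C B2 -> @embedding A B1 f1 -> @embedding A B2 f2 ->
    exists (D : fstruct L) (g1 : B1 -> D) (g2 : B2 -> D),
      C D /\ @embedding B1 D g1 /\ @embedding B2 D g2 /\ g1 \o f1 =1 g2 \o f2.

Definition fraisse_class (C : fstruct L -> Prop) : Prop :=
  hereditary C /\ JEP C /\ AP C.

Definition countable_struct (M : struct L) : Prop :=
  exists f : M -> nat, injective f.

Definition homogeneous (M : struct L) : Prop :=
  forall (A : fstruct L) (f g : A -> M), @embedding A M f -> @embedding A M g ->
    exists h : M -> M, automorphism h /\ h \o f =1 g.

Definition age_is (M : struct L) (C : fstruct L -> Prop) : Prop :=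
  forall A : fstruct L, C A <-> (0 < #|fcar A| /\ embeds A M).

Definition fraisse_limit (C : fstruct L -> Prop) (M : struct L) : Prop :=
  inhabited M /\ countable_struct M /\ homogeneous M /\ age_is M C.

Inductive formula : Type :=
  | FEq : nat -> nat -> formula
  | FRel : forall s : sym L, ('I_(arity s) -> nat) -> formula
  | FNeg : formula -> formula
  | FAnd : formula -> formula -> formula
  | FEx : nat -> formula -> formula.

Definition upd (M : Type) (e : nat -> M) (i : nat) (x : M) : nat -> M :=
  fun j => if j == i then x else e j.

Fixpoint sat (M : struct L) (e : nat -> M) (phi : formula) : Prop :=
  match phi with
  | FEq i j => e i = e j
  | FRel s v => rel (e \o v)
  | FNeg p => ~ sat e p
  | FAnd p q => sat e p /\ sat e q
  | FEx i p => exists x : M, sat (upd e i x) p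
  end.

Definition definable2 (M : struct L) (R : M -> M -> Prop) : Prop :=
  exists phi : formula, forall e : nat -> M, sat e phi <-> R (e 0) (e 1).

Definition strict_total_order (T : Type) (R : T -> T -> Prop) : Prop :=
  (forall x, ~ R x x) /\ (forall x y z, R x y -> R y z -> R x z) /\
  (forall x y, x <> y -> R x y \/ R y x).

Definition has_total_order_reduct (M : struct L) : Prop :=
  exists R : M -> M -> Prop, definable2 R /\ strict_total_order R.

Definition image_in (A B C : struct L) (e : A -> C) (g : B -> C) : Prop :=
  forall a : A, exists b : B, e a = g b.

Definition monochromatic (A B C : struct L) (chi : (A -> C) -> bool) (g : B -> C) : Prop :=
  forall e1 e2 : A -> C, embedding e1 -> embedding e2 ->
    image_in e1 g -> image_in e2 g -> chi e1 = chi e2.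

End Basics.

(* Main.v *)
Require Import Defs.
From mathcomp Require Import all_boot.
From mathcomp Require Import zify.
From Stdlib Require Import Classical FunctionalExtensionality Lia.
Set Implicit Arguments. Unset Strict Implicit. Unset Printing Implicit Defensive.

Section H.
Variable L : lang.

Lemma emb_ext (A B : struct L) (f g : A -> B) : f =1 g -> embedding f -> embedding g.
Proof. by move=> /functional_extensionality ->. Qed.

Lemma emb_comp (A B D : struct L) (f : A -> B) (g : B -> D) :
  embedding f -> embedding g -> embedding (g \o f).
Proof.
move=> [fi fr] [gi gr]; split; first exact: inj_comp.
by move=> s al; rewrite (fr s al) (gr s (f \o al)).
Qed.

Definition pullback (M : struct L) (T : finType) (h : T -> M) : fstruct L :=
  @FStruct L T (fun s al => Defs.rel (h \o al)).

Lemma pullback_emb (M : struct L) (T : finType) (h : T -> M) :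
  injective h -> @embedding L (pullback h) M h.
Proof. by move=> hi; split. Qed.

Lemma pullback_C (M : struct L) C (T : finType) (h : T -> M) :
  age_is M C -> injective h -> 0 < #|T| -> C (pullback h).
Proof. move=> Hage hi hT; apply/Hage; split => //; exists h; exact: pullback_emb. Qed.

Lemma conj_def (M : struct L) (X : finType) (P : X -> (nat -> M) -> Prop) :
  (forall x, exists phi, forall e, sat e phi <-> P x e) ->
  exists phi, forall e, sat e phi <-> forall x, P x e.
Proof.
move=> HP.
suff HL : forall l : seq X, exists phi, forall e, sat e phi <-> forall x, x \in l -> P x e.
  have [phi Hphi] := HL (enum X).
  exists phi => e; split.
    by move=> /Hphi H x; apply: H; rewrite mem_enum.
  by move=> H; apply/Hphi => x _; apply: H.
elim=> [|x l [phi IH]].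
  by exists (FEq L 0 0) => e /=; split=> // _ x.
have [psi Hpsi] := HP x.
exists (FAnd psi phi) => e /=; rewrite Hpsi IH; split.
  by move=> [H1 H2] y; rewrite in_cons => /orP [/eqP -> //|]; apply: H2.
by move=> H; split; [apply: H; rewrite mem_head | move=> y yl; apply: H; rewrite in_cons yl orbT].
Qed.

Lemma card_two (T : finType) : #|T| = 2 -> exists a b : T, a != b /\ forall t, t = a \/ t = b.
Proof.
rewrite cardE; have U := enum_uniq T; have Mm := mem_enum T.
case E: (enum T) U Mm => [|a [|b [|c l]]] //= U Mm _.
exists a, b; split; first by move: U; rewrite inE andbT.
move=> t; have : t \in [:: a; b] by rewrite Mm.
by rewrite !inE => /orP [/eqP|/eqP]; [left|right].
Qed.
End H.

Section P.
Variable L : lang.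
Variable A0 : fstruct L.
Variables a b : A0.
Hypothesis hab : a != b.
Hypothesis hab2 : forall t : A0, t = a \/ t = b.

Definition sel (Y : Type) (u v : Y) : A0 -> Y := fun t => if t == a then u else v.

Lemma sel_a Y (u v : Y) : sel u v a = u.
Proof. by rewrite /sel eqxx. Qed.
Lemma sel_b Y (u v : Y) : sel u v b = v.
Proof. by rewrite /sel eq_sym (negbTE hab). Qed.

Lemma sel_inj Y (u v : Y) : u <> v -> injective (sel u v).
Proof.
move=> uv t1 t2.
case: (hab2 t1) => ->; case: (hab2 t2) => -> //; rewrite ?sel_a ?sel_b => E;
  by case: uv.
Qed.

Lemma sel_comp Y Z (h : Y -> Z) (u v : Y) : h \o sel u v =1 sel (h u) (h v).
Proof. by move=> t; rewrite /sel /=; case: (t == a). Qed.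

Variable M : struct L.
Definition R (x y : M) : Prop := @embedding L A0 M (sel x y).

Lemma R_neq x y : R x y -> x <> y.
Proof.
move=> [hi _] E; move: (hi a b); rewrite sel_a sel_b => /(_ E) Eab.
by move: hab; rewrite Eab eqxx.
Qed.

Hypothesis rigA : rigid A0.

Lemma R_asym x y : R x y -> R y x -> False.
Proof.
move=> [hi1 hr1] [hi2 hr2].
have ba : b <> a by move=> E; move: hab; rewrite E eqxx.
have aut : automorphism (A:=A0) (sel b a).
  split; last first.
    by move=> y'; case: (hab2 y') => ->; [exists b; rewrite sel_b | exists a; rewrite sel_a].
  split; first exact: sel_inj.
  move=> s al; rewrite (hr1 s al) (hr2 s (sel b a \o al)).
  have -> : sel y x \o (sel b a \o al) = sel x y \o al.
    apply: functional_extensionality => i /=.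
    by case: (hab2 (al i)) => ->; rewrite ?sel_a ?sel_b ?sel_a ?sel_b ?sel_a ?sel_b.
  by [].
have := rigA aut a; rewrite sel_a => E.
by move: hab; rewrite E eqxx.
Qed.

Definition vv (s : sym L) (al : 'I_(arity s) -> A0) : 'I_(arity s) -> nat :=
  fun i => if al i == a then 0 else 1.

Lemma vv_eq (e : nat -> M) s (al : 'I_(arity s) -> A0) :
  e \o vv al = sel (e 0) (e 1) \o al.
Proof. by apply: functional_extensionality => i; rewrite /= /vv /sel; case: (al i == a). Qed.

Lemma R_def : definable2 R.
Proof.
have [phi Hphi] : exists phi, forall e : nat -> M, sat e phi <->
    forall (s : sym L) (al : {ffun 'I_(arity s) -> A0}), (@Defs.frel L A0 s al <-> Defs.rel (e \o vv al)).
  apply: conj_def => s; apply: conj_def => al.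
  case: (classic (Defs.frel al)) => H.
    exists (FRel (vv al)) => e /=; split; [by move=> ?; split | by case => + _; apply].
  exists (FNeg (FRel (vv al))) => e /=; split.
    by move=> nr; split => // ?.
  by move=> [_ h] r; apply: H; apply: h.
exists (FAnd (FNeg (FEq L 0 1)) phi) => e /=; rewrite Hphi; split.
  move=> [ne Hr]; split; first by apply: sel_inj.
  move=> s al.
  have E : (fun i => [ffun i => al i] i) = al by apply: functional_extensionality => i; rewrite ffunE.
  have := Hr s [ffun i => al i]; rewrite vv_eq.
  have -> : Defs.frel [ffun i => al i] = Defs.rel al.
    by rewrite /=; f_equal; apply: functional_extensionality => i; rewrite ffunE.
  have -> : sel (e 0) (e 1) \o [ffun i => al i] = sel (e 0) (e 1) \o al.
    by apply: functional_extensionality => i; rewrite /= ffunE.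
  by [].
move=> [hi hr]; split.
  by move=> E; move: (hi a b); rewrite sel_a sel_b => /(_ E) Eab; move: hab; rewrite Eab eqxx.
by move=> s al; rewrite vv_eq; apply: hr.
Qed.
End P.

Lemma R_total L (C : fstruct L -> Prop) (M : struct L) (A0 : fstruct L) (a b : A0) :
  a != b -> (forall t : A0, t = a \/ t = b) -> age_is M C -> C A0 -> #|A0| = 2 ->
  (forall A B : fstruct L, C A -> C B -> #|fcar A| = 2 -> #|fcar B| = 2 ->
     isomorphic A B) ->
  forall x y : M, x <> y -> R a x y \/ R a y x.
Proof.
move=> hab hab2 Hage CA0 cA0 Huniq x y xy.
pose k : bool -> M := fun t => if t then x else y.
have ki : injective k by move=> [] [] //= E; case: xy; rewrite E.
have CS := pullback_C Hage ki (ltac:(by rewrite card_bool) : 0 < #|{: bool}|).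
have [f [[fi fr] fs]] := Huniq _ _ CA0 CS cA0 (card_bool).
have kf : embedding (k \o f) := emb_comp (conj fi fr) (pullback_emb ki).
have fab : f a != f b by apply/negP => /eqP /fi E; move: hab; rewrite E eqxx.
case Efa : (f a) fab => /=; case Efb: (f b) => // _.
  left; apply: emb_ext kf => t; case: (hab2 t) => ->; rewrite /= ?sel_a ?sel_b //.
  + by rewrite Efa.
  + by rewrite Efb.
right; apply: emb_ext kf => t; case: (hab2 t) => ->; rewrite /= ?sel_a ?sel_b //.
+ by rewrite Efa.
+ by rewrite Efb.
Qed.

Theorem corollary1p6 (L : lang) (C : fstruct L -> Prop) (M : struct L) :
  fraisse_class C ->
  (forall A : fstruct L, C A -> rigid A) ->
  fraisse_limit C M ->
  (exists A : fstruct L, C A /\ #|fcar A| = 2) ->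
  (forall A B : fstruct L, C A -> C B -> #|fcar A| = 2 -> #|fcar B| = 2 ->
     isomorphic A B) ->
  has_total_order_reduct M \/
  exists A B : fstruct L, C A /\ C B /\ #|fcar A| = 2 /\ #|fcar B| = 3 /\
    forall D : fstruct L, C D ->
      exists chi : (fcar A -> fcar D) -> bool,
        forall g : fcar B -> fcar D, @embedding _ B D g ->
          ~ @monochromatic _ A B D chi g.
Proof.
move=> _ Hrig [_ [_ [_ Hage]]] [A0 [CA0 cA0]] Huniq.
have [a [b [hab hab2]]] := card_two cA0.
have rigA := Hrig _ CA0.
have Htot := R_total hab hab2 Hage CA0 cA0 Huniq.
case: (classic (exists x y z : M, R a x y /\ R a y z /\ ~ R a x z)); last first.
  move=> nH; left; exists (@R L A0 a M); split; first exact: (R_def hab hab2 M).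
  split; first by move=> x /(R_neq hab); apply.
  split; last exact: Htot.
  move=> x y z Rxy Ryz; apply: NNPP => nxz; apply: nH; by exists x, y, z.
move=> [x [y [z [Rxy [Ryz nRxz]]]]]; right.
have nxy := R_neq hab Rxy; have nyz := R_neq hab Ryz.
have nzx : z <> x by move=> E; rewrite E in Ryz; exact: (R_asym hab hab2 rigA Rxy Ryz).
have Rzx : R a z x by case: (Htot z x nzx) => // /nRxz.
pose h : 'I_3 -> M := fun i => if val i == 0 then x else if val i == 1 then y else z.
have hi : injective h.
  move=> [[|[|[|i]]] Hi] [[|[|[|j]]] Hj] //= E; try (by apply/val_inj);
    by [case: nxy | case: nxy; rewrite E | case: nyz | case: nyz; rewrite E
       | case: nzx | case: nzx; rewrite E].
have CB := pullback_C Hage hi (ltac:(by rewrite card_ord) : 0 < #|{: 'I_3}|).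
exists A0, (pullback h); split=> //; split=> //; split=> //; split; first by rewrite /= card_ord.
move=> D CD.
exists (fun e => (enum_rank (e a) < enum_rank (e b))%N).
move=> g gemb mono.
pose i0 : 'I_3 := @Ordinal 3 0 isT.
pose i1 : 'I_3 := @Ordinal 3 1 isT.
pose i2 : 'I_3 := @Ordinal 3 2 isT.
have qemb : forall i j : 'I_3, R a (h i) (h j) -> i <> j ->
    @embedding L A0 (pullback h) (sel a i j).
  move=> i j Rij nij; split; first exact: (sel_inj hab hab2).
  move=> s al; rewrite (proj2 Rij s al) /=.
  have -> : h \o (sel a i j \o al) = sel a (h i) (h j) \o al.
    by apply: functional_extensionality => t; rewrite /= /sel; case: (al t == a).
  by [].
have e1 := emb_comp (qemb i0 i1 Rxy ltac:(by [])) gemb.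
have e2 := emb_comp (qemb i1 i2 Ryz ltac:(by [])) gemb.
have e3 := emb_comp (qemb i2 i0 Rzx ltac:(by [])) gemb.
have img : forall i j : 'I_3, image_in (A:=A0) (B:=pullback h) (C:=D) (g \o sel a i j) g.
  by move=> i j t; exists (sel a i j t).
have m12 := mono _ _ e1 e2 (img _ _) (img _ _).
have m23 := mono _ _ e2 e3 (img _ _) (img _ _).
move: m12 m23; rewrite /= !sel_a !(sel_b hab).
have r01 : nat_of_ord (enum_rank (g i0)) <> nat_of_ord (enum_rank (g i1)).
  by move=> /val_inj /enum_rank_inj /(proj1 gemb).
move: r01.
case: (enum_rank (g i0)) => r0 /= _; case: (enum_rank (g i1)) => r1 /= _;
  case: (enum_rank (g i2)) => r2 /= _.
move=> ne; case: (ltnP r0 r1) => H1; case: (ltnP r1 r2) => H2; case: (ltnP r2 r0) => H3 //=. all: move=> _ _; lia.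
Qed.
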